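(* Let $L$ be a link. For every $n \ge 2$, $\beta_2(L) \le \beta_n(L)$.
   Context: An $n$-crossing ($n\ge 2$) in a link projection is a point where $n$ strands meet, each bisecting the crossing, with the strands assigned distinct levels $1,\dots,n$ (level $1$ on top) recording their heights. An $m$-string $n$-crossing braid is a braid diagram on $m$ strings all of whose crossings are $n$-crossings; each such crossing involves strings in consecutive positions $j,\dots,j+n-1$ and reverses their order. A $2$-crossing braid is an ordinary braid. The $n$-crossing braid index $\beta_n(L)$ is the minimum number of strings of an $n$-crossing braid whose closure is isotopic to $L$, and $\beta_n(L)=\infty$ if no such braid exists. Thus $\beta_2(L)$ is the usual braid index. *)

(* Defs.v *)
From mathcomp Require Import all_boot.
From Stdlib Require Import Relation_Operators.
Set Implicit Arguments. Unset Strict Implicit. Unset Printing Implicit Defensive.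

(** A generator [(i, b)] of an ordinary braid on [m] strings is the crossing
   between the strings in positions [i] and [i+1] (0-indexed, [i.+1 < m]);
   [b = true] means the left string (position [i]) passes OVER the right one
   (sigma_i), [b = false] means it passes under (sigma_i^{-1}).
   A braid is a pair (number of strings, word). *)
Definition gen := (nat * bool)%type.
Definition braid := (nat * seq gen)%type.

Definition valid_braid (x : braid) : bool := all (fun g : gen => g.1.+1 < x.1) x.2.

(** One elementary move between braids whose closures are isotopic links:
    braid-group relations, conjugation, and (positive/negative) stabilisation
    (Markov moves). *)
Inductive markov_step : braid -> braid -> Prop :=
| MS_free m w1 w2 i b :
    valid_braid (m, w1 ++ w2) -> i.+1 < m ->
    markov_step (m, w1 ++ (i, b) :: (i, ~~ b) :: w2) (m, w1 ++ w2)
| MS_far m w1 w2 i j b c :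
    valid_braid (m, w1 ++ w2) -> i.+1 < j -> j.+1 < m ->
    markov_step (m, w1 ++ (i, b) :: (j, c) :: w2) (m, w1 ++ (j, c) :: (i, b) :: w2)
| MS_braid m w1 w2 i :
    valid_braid (m, w1 ++ w2) -> i.+2 < m ->
    markov_step (m, w1 ++ [:: (i, true); (i.+1, true); (i, true)] ++ w2)
                (m, w1 ++ [:: (i.+1, true); (i, true); (i.+1, true)] ++ w2)
| MS_conj m g w :
    valid_braid (m, g :: w) -> markov_step (m, g :: w) (m, rcons w g)
| MS_stab m w b :
    0 < m -> valid_braid (m, w) -> markov_step (m, w) (m.+1, rcons w (m.-1, b)).

(** Closures of [x] and [y] are isotopic links (Markov's theorem). *)
Definition closure_isotopic : braid -> braid -> Prop :=
  clos_refl_sym_trans braid markov_step.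

(** A link is represented by a braid whose closure it is (Alexander's
    theorem); two representatives denote the same link iff
    [closure_isotopic]. *)
Definition link := braid.

(** An n-crossing is [(j, lv)]: it involves the strings in positions
   [j, ..., j+n-1] and reverses their order; [nth 0 lv k] is the level
   (in 1..n, level 1 on top) of the string entering at position [j+k]. *)
Definition ncrossing := (nat * seq nat)%type.

Definition valid_ncrossing (n m : nat) (c : ncrossing) : bool :=
  (c.1 + n <= m) && perm_eq c.2 (iota 1 n).

(** Perturbation of an n-crossing into ordinary crossings: the positive
    half-twist word (sigma_j ... sigma_{j+n-2})(sigma_j ... sigma_{j+n-3})...
    sigma_j, where in block [k] the string entering at position [j+k]
    successively crosses the strings entering at [j+k+1+t]; the sign of each
    crossing is given by the levels (the string with smaller level is on top). *)
Definition resolve (n : nat) (c : ncrossing) : seq gen :=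
  let: (j, lv) := c in
  flatten [seq [seq (j + t, nth 0 lv k < nth 0 lv (k.+1 + t)) | t <- iota 0 (n.-1 - k)]
          | k <- iota 0 n.-1].

Definition has_ncrossing_braid (n : nat) (L : link) (m : nat) : Prop :=
  exists w : seq ncrossing,
    all (valid_ncrossing n m) w /\
    closure_isotopic (m, flatten (map (resolve n) w)) L.

(** [beta_le n L k] : the n-crossing braid index beta_n(L) is <= k
    (false for all k exactly when beta_n(L) = infinity). *)
Definition beta_le (n : nat) (L : link) (k : nat) : Prop :=
  exists m, m <= k /\ has_ncrossing_braid n L m.

(* Main.v *)
Require Import Defs.
From mathcomp Require Import all_boot zify.

Definition g2c (g : gen) : ncrossing := (g.1, if g.2 then [:: 1; 2] else [:: 2; 1]).

Lemma resolve2 g : resolve 2 (g2c g) = [:: g].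
Proof. by case: g => i [] /=; rewrite addn0. Qed.

Lemma flat2 s : flatten (map (resolve 2) (map g2c s)) = s.
Proof. by elim: s => // g s IH; rewrite -[RHS]/([:: g] ++ s) -resolve2 -{2}IH. Qed.

Lemma resolve_ok n m c : valid_ncrossing n m c ->
  all (fun g : gen => g.1.+2 <= m) (resolve n c).
Proof.
case: c => j lv /andP [/= Hj _].
apply/allP => g /flattenP [s /mapP [k Hk ->]] /mapP [t Ht ->] /=.
rewrite mem_iota in Hk; rewrite mem_iota in Ht.
move: Hk Ht Hj => /andP [_ Hk] /andP [_ Ht] Hj.
rewrite add0n in Hk Ht.
have : t.+2 <= n by move: Ht Hk; case: n Hj => // n' _; rewrite /=; lia.
lia.
Qed.

Theorem theorem5p1 (L : link) (n : nat) (hn : 2 <= n) :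
  forall k : nat, beta_le n L k -> beta_le 2 L k.
Proof.
move=> k [m [Hmk [w [Hw Hiso]]]].
exists m; split => //.
exists (map g2c (flatten (map (resolve n) w))); split; last by rewrite flat2.
have H : all (fun g : gen => g.1.+2 <= m) (flatten (map (resolve n) w)).
  elim: w Hw {Hiso} => //= c w IH /andP [Hc Hw].
  by rewrite all_cat (@resolve_ok n m c Hc) IH.
rewrite all_map; apply: sub_all H => -[i b] /= Hi.
rewrite /valid_ncrossing /= addn2 Hi /=.
by case: b.
Qed.
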